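(* Let $D\ge3$ be an integer, $k\in\{1,0,-1\}$, $\Omega_{k,D-1}>0$, $\alpha^2=\frac{2(D-2)}{D-1}$, and fix temperatures $0<T_{\rm c}<T_{\rm h}$ and volumes $0<V_1<V_2$. Set $T_1\equiv T_{\rm c}$, $T_2\equiv T_{\rm h}$ and, for $i,j\in\{1,2\}$ and electric potential $\tilde\Phi>0$, $$\xi_{ij}=\frac{1}{2^{D-1}}\left[1+\sqrt{1+D(D-2)\left(\frac{\alpha^2\tilde\Phi^2}{4\pi^2T_i^2}-\frac{k}{4\pi^2T_i^2}\left(\frac{\Omega_{k,D-1}}{V_j}\right)^{\frac{2}{D-1}}\right)}\right]^{D-1},$$ $$\chi_{ij}=\xi_{ij}^{\frac{D-2}{D-1}}\left[\xi_{ij}^{\frac{2}{D-1}}+\frac{D^2}{16\pi^2T_i^2}\left(k\left(\frac{\Omega_{k,D-1}}{V_j}\right)^{\frac{2}{D-1}}-\alpha^2\tilde\Phi^2\right)\right].$$ Define $$\eta_{\rm non\text{-}regen}(\tilde\Phi)=1-\frac{T_{\rm c}^D(V_2\xi_{12}-V_1\xi_{11})+\frac{D-1}{D}V_2(T_{\rm h}^D\chi_{22}-T_{\rm c}^D\chi_{12})}{T_{\rm h}^D(V_2\xi_{22}-V_1\xi_{21})+\frac{D-1}{D}V_1(T_{\rm h}^D\chi_{21}-T_{\rm c}^D\chi_{11})},$$ $$\eta_{\rm regen}(\tilde\Phi)=1-\frac{T_{\rm c}^D(V_2\xi_{12}-V_1\xi_{11})+\frac{D-1}{D}\left[V_2(T_{\rm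 h}^D\chi_{22}-T_{\rm c}^D\chi_{12})-V_1(T_{\rm h}^D\chi_{21}-T_{\rm c}^D\chi_{11})\right]}{T_{\rm h}^D(V_2\xi_{22}-V_1\xi_{21})}.$$ Then, as $\tilde\Phi\to\infty$ (with $T_{\rm c},T_{\rm h},V_1,V_2$ fixed), both $\eta_{\rm non\text{-}regen}(\tilde\Phi)=1-\frac{T_{\rm c}}{T_{\rm h}}+\mathcal{O}(\tilde\Phi^{-1})$ and $\eta_{\rm regen}(\tilde\Phi)=1-\frac{T_{\rm c}}{T_{\rm h}}+\mathcal{O}(\tilde\Phi^{-1})$; in particular both tend to the Carnot efficiency $1-T_{\rm c}/T_{\rm h}$.
   Context: These are the Stirling efficiencies (without and with an ideal regenerator) of a thermal state of a $D$-dimensional holographic CFT on a constant-curvature spatial manifold of volume $V=\Omega_{k,D-1}R^{D-1}$ in the grand canonical (fixed electric potential $\tilde\Phi$) ensemble, dual to a $(D+1)$-dimensional AdS-Reissner-Nordström black hole (large, positive heat capacity branch); $k=1,0,-1$ labels spherical, planar, hyperbolic geometry. The cycle has hot isotherm at $T_{\rm h}$, cold isotherm at $T_{\rm c}$, and isochores at volumes $V_1<V_2$, with $\tilde\Phi$ held fixed throughout. *)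

(* Defs.v *)
From Stdlib Require Import Reals.
Open Scope R_scope.

Definition Dr (D : nat) : R := INR D.

Definition alpha2 (D : nat) : R := 2 * (Dr D - 2) / (Dr D - 1).

Definition curv (D : nat) (Om V : R) : R := Rpower (Om / V) (2 / (Dr D - 1)).

(* xi_{ij} with T = T_i, V = V_j, Phi = electric potential *)
Definition xi (D : nat) (k Om T V Phi : R) : R :=
  / 2 ^ (D - 1) *
  (1 + sqrt (1 + Dr D * (Dr D - 2) *
       (alpha2 D * Phi ^ 2 / (4 * PI ^ 2 * T ^ 2)
        - k / (4 * PI ^ 2 * T ^ 2) * curv D Om V))) ^ (D - 1).

Definition chi (D : nat) (k Om T V Phi : R) : R :=
  let x := xi D k Om T V Phi in
  Rpower x ((Dr D - 2) / (Dr D - 1)) *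
  (Rpower x (2 / (Dr D - 1))
   + Dr D ^ 2 / (16 * PI ^ 2 * T ^ 2) * (k * curv D Om V - alpha2 D * Phi ^ 2)).

Definition eta_nonregen (D : nat) (k Om Tc Th V1 V2 Phi : R) : R :=
  let xi11 := xi D k Om Tc V1 Phi in
  let xi12 := xi D k Om Tc V2 Phi in
  let xi21 := xi D k Om Th V1 Phi in
  let xi22 := xi D k Om Th V2 Phi in
  let chi11 := chi D k Om Tc V1 Phi in
  let chi12 := chi D k Om Tc V2 Phi in
  let chi21 := chi D k Om Th V1 Phi in
  let chi22 := chi D k Om Th V2 Phi in
  1 - (Tc ^ D * (V2 * xi12 - V1 * xi11)
       + (Dr D - 1) / Dr D * V2 * (Th ^ D * chi22 - Tc ^ D * chi12))
      / (Th ^ D * (V2 * xi22 - V1 * xi21)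
       + (Dr D - 1) / Dr D * V1 * (Th ^ D * chi21 - Tc ^ D * chi11)).

Definition eta_regen (D : nat) (k Om Tc Th V1 V2 Phi : R) : R :=
  let xi11 := xi D k Om Tc V1 Phi in
  let xi12 := xi D k Om Tc V2 Phi in
  let xi21 := xi D k Om Th V1 Phi in
  let xi22 := xi D k Om Th V2 Phi in
  let chi11 := chi D k Om Tc V1 Phi in
  let chi12 := chi D k Om Tc V2 Phi in
  let chi21 := chi D k Om Th V1 Phi in
  let chi22 := chi D k Om Th V2 Phi in
  1 - (Tc ^ D * (V2 * xi12 - V1 * xi11)
       + (Dr D - 1) / Dr D * (V2 * (Th ^ D * chi22 - Tc ^ D * chi12)
                               - V1 * (Th ^ D * chi21 - Tc ^ D * chi11)))
      / (Th ^ D * (V2 * xi22 - V1 * xi21)).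

(* Main.v *)
Require Import Defs.
From Stdlib Require Import Reals Lra Psatz.
Open Scope R_scope.

Lemma powL1 (n : nat) : exists C, 0 <= C /\ forall x, Rabs x <= 1 -> Rabs ((1+x)^n - 1) <= C * Rabs x.
Proof.
  induction n as [|n [C [HC IH]]].
  - exists 0; split; [lra|]. intros x _. simpl. rewrite Rminus_diag, Rabs_R0. lra.
  - exists (2*C+1); split; [lra|]. intros x Hx.
    replace ((1+x)^S n - 1) with ((1+x)*((1+x)^n - 1) + x) by (simpl; ring).
    eapply Rle_trans; [apply Rabs_triang|]. rewrite Rabs_mult.
    assert (H1 : Rabs (1+x) <= 2) by (eapply Rle_trans; [apply Rabs_triang|]; rewrite Rabs_R1; lra).
    specialize (IH x Hx).
    pose proof (Rabs_pos ((1+x)^n - 1)). pose proof (Rabs_pos (1+x)). pose proof (Rabs_pos x).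
    nra.
Qed.

Lemma powL2 (n : nat) : exists C, 0 <= C /\ forall x, Rabs x <= 1 -> Rabs ((1+x)^n - 1 - INR n * x) <= C * x^2.
Proof.
  induction n as [|n [C [HC IH]]].
  - exists 0; split; [lra|]. intros x _. simpl. replace (1-1-0*x) with 0 by ring. rewrite Rabs_R0. lra.
  - exists (2*C+INR n); split. { pose proof (pos_INR n); lra. } intros x Hx.
    replace ((1+x)^S n - 1 - INR (S n) * x) with ((1+x)*((1+x)^n - 1 - INR n * x) + INR n * x^2) by (rewrite S_INR; simpl; ring).
    eapply Rle_trans; [apply Rabs_triang|]. rewrite !Rabs_mult.
    assert (H1 : Rabs (1+x) <= 2) by (eapply Rle_trans; [apply Rabs_triang|]; rewrite Rabs_R1; lra).
    specialize (IH x Hx).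
    rewrite (Rabs_right (INR n)) by (apply Rle_ge, pos_INR).
    rewrite (Rabs_right (x^2)) by (apply Rle_ge; nra).
    pose proof (Rabs_pos ((1+x)^n - 1 - INR n * x)). pose proof (Rabs_pos (1+x)). pose proof (pos_INR n).
    assert (0 <= x^2) by nra.
    nra.
Qed.

Lemma Rpower_pow_frac (w : R) (m n : nat) : 0 < w -> (0 < n)%nat ->
  Rpower (w ^ n) (INR m / INR n) = w ^ m.
Proof.
  intros Hw Hn. unfold Rpower. rewrite ln_pow by exact Hw.
  assert (INR n <> 0) by (apply not_0_INR; lia).
  replace (INR m / INR n * (INR n * ln w)) with (INR m * ln w) by (field; auto).
  rewrite <- (Rpower_pow m w Hw). reflexivity.
Qed.

Lemma comb_core (Tc Th W S nn dd e : R) :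
  0 < Tc -> Tc < Th -> 0 < W -> 0 < S -> 0 <= e ->
  Rabs nn <= S * e -> Rabs dd <= S * e -> S * e <= Th * W / 2 ->
  Rabs ((Tc * W + nn) / (Th * W + dd) - Tc / Th) <= (2 * (Th + Tc) * S / (Th * Th * W)) * e.
Proof.
  intros. assert (Hd : Th * W / 2 <= Th * W + dd).
  { pose proof (Rle_abs (-dd)) as Hq. rewrite Rabs_Ropp in Hq. nra. }
  assert (0 < Th * W) by nra.
  replace ((Tc * W + nn) / (Th * W + dd) - Tc / Th) with ((Th * nn - Tc * dd) / (Th * (Th * W + dd))) by (field; lra).
  unfold Rdiv. rewrite Rabs_mult, Rabs_inv.
  rewrite (Rabs_right (Th * (Th*W+dd))) by nra.
  assert (Rabs (Th * nn - Tc * dd) <= (Th + Tc) * S * e).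
  { eapply Rle_trans; [apply Rabs_triang|]. rewrite Rabs_Ropp, !Rabs_mult, (Rabs_right Th), (Rabs_right Tc) by lra. pose proof (Rabs_pos nn); pose proof (Rabs_pos dd). nra. }
  assert (Hi : / (Th * (Th * W + dd)) <= / (Th * (Th * W / 2))).
  { apply Rinv_le_contravar; nra. }
  eapply Rle_trans.
  { apply Rmult_le_compat; [apply Rabs_pos| left; apply Rinv_0_lt_compat; nra | exact H8 | exact Hi]. }
  right. field. lra.
Qed.

Definition wfun (D : nat) (k Om T V Phi : R) : R :=
  (T + sqrt (T^2 + Dr D * (Dr D - 2) * (alpha2 D * Phi^2 - k * curv D Om V) / (4 * PI^2))) / 2 / T.

Lemma xi_form m k Om T V Phi : 0 < T ->
  xi (S (S (S m))) k Om T V Phi = (wfun (S (S (S m))) k Om T V Phi) ^ (S (S m)).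
Proof.
  intros HT. unfold xi, wfun.
  replace (S (S (S m)) - 1)%nat with (S (S m)) by lia.
  pose proof PI_RGT_0.
  replace (1 + sqrt (1 + Dr (S (S (S m))) * (Dr (S (S (S m))) - 2) *
     (alpha2 (S (S (S m))) * Phi ^ 2 / (4 * PI ^ 2 * T ^ 2) -
      k / (4 * PI ^ 2 * T ^ 2) * curv (S (S (S m))) Om V)))
   with ((T + sqrt (T ^ 2 + Dr (S (S (S m))) * (Dr (S (S (S m))) - 2) *
     (alpha2 (S (S (S m))) * Phi ^ 2 - k * curv (S (S (S m))) Om V) / (4 * PI ^ 2))) / T).
  2:{ set (Y := (1 + Dr _ * _ * _)).
      assert (HY : T ^ 2 + Dr (S (S (S m))) * (Dr (S (S (S m))) - 2) *
     (alpha2 (S (S (S m))) * Phi ^ 2 - k * curv (S (S (S m))) Om V) / (4 * PI ^ 2) = T^2 * Y)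
        by (unfold Y; field; lra).
      rewrite HY, sqrt_mult_alt, sqrt_pow2 by (try apply pow2_ge_0; lra). field. lra. }
  set (q := T + _).
  rewrite <- pow_inv, <- Rpow_mult_distr. f_equal. unfold q. field. lra.
Qed.

Lemma wfun_pos D k Om T V Phi : 0 < T -> 0 < wfun D k Om T V Phi.
Proof.
  intros HT. unfold wfun. pose proof (sqrt_pos (T ^ 2 + Dr D * (Dr D - 2) * (alpha2 D * Phi ^ 2 - k * curv D Om V) / (4 * PI ^ 2))).
  unfold Rdiv. apply Rmult_lt_0_compat; [|apply Rinv_0_lt_compat; lra]. lra.
Qed.

Lemma chi_form m k Om T V Phi : 0 < T ->
  chi (S (S (S m))) k Om T V Phi =
   (wfun (S (S (S m))) k Om T V Phi) ^ (S m) *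
   ((wfun (S (S (S m))) k Om T V Phi) ^ 2 + Dr (S (S (S m))) ^ 2 / (16 * PI ^ 2 * T ^ 2) *
      (k * curv (S (S (S m))) Om V - alpha2 (S (S (S m))) * Phi ^ 2)).
Proof.
  intros HT. unfold chi. rewrite xi_form by exact HT.
  pose proof (wfun_pos (S (S (S m))) k Om T V Phi HT) as Hw.
  assert (E1 : (Dr (S (S (S m))) - 2) / (Dr (S (S (S m))) - 1) = INR (S m) / INR (S (S m))).
  { unfold Dr. rewrite !S_INR. f_equal; ring. }
  assert (E2 : 2 / (Dr (S (S (S m))) - 1) = INR 2 / INR (S (S m))).
  { unfold Dr. rewrite !S_INR. simpl INR. f_equal; ring. }
  rewrite E1, E2, !Rpower_pow_frac by (auto; lia). reflexivity.
Qed.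

Definition bb (D : nat) : R := sqrt (Dr D * (Dr D - 2) * alpha2 D) / (4 * PI).

Lemma div_le_1 (u p : R) : 0 <= u -> u < p -> u / p <= 1.
Proof. intros. apply (Rmult_le_reg_r p); [lra|]. unfold Rdiv. rewrite Rmult_assoc, Rinv_l by lra. lra. Qed.

Lemma per_T m k Om V T : 0 < T -> exists K M, 0 < M /\ forall Phi, M < Phi ->
  Rabs (T ^ (S (S (S m))) * xi (S (S (S m))) k Om T V Phi / (bb (S (S (S m))) * Phi) ^ (S (S m)) - T) <= K / Phi /\
  Rabs (T ^ (S (S (S m))) * chi (S (S (S m))) k Om T V Phi / (bb (S (S (S m))) * Phi) ^ (S (S m))
     - bb (S (S (S m))) * Phi * (1 - Dr (S (S (S m))) / (Dr (S (S (S m))) - 2))) <= K / Phi.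
Proof.
  intros HT.
  set (c := curv (S (S (S m))) Om V).
  set (a := INR (S m)).
  assert (Ha0 : 1 <= a) by (unfold a; rewrite S_INR; pose proof (pos_INR m); lra).
  assert (HD : Dr (S (S (S m))) = a + 2) by (unfold Dr, a; rewrite !S_INR; ring).
  assert (Hal : alpha2 (S (S (S m))) = 2*a/(a+1)) by (unfold alpha2; rewrite HD; field; lra).
  pose proof PI_RGT_0 as Hpi.
  assert (Hpos : 0 < (a+2)*a*(2*a/(a+1))).
  { apply Rmult_lt_0_compat; [nra|]. unfold Rdiv; apply Rmult_lt_0_compat; [lra| apply Rinv_0_lt_compat; lra]. }
  set (b := bb (S (S (S m)))).
  assert (Hb2 : b*b = (a+2)*a*(2*a/(a+1))/(16*PI^2)).
  { unfold b, bb. rewrite HD, Hal.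
    replace (sqrt ((a + 2) * (a + 2 - 2) * (2 * a / (a + 1))) / (4 * PI) *
      (sqrt ((a + 2) * (a + 2 - 2) * (2 * a / (a + 1))) / (4 * PI))) with
     (sqrt ((a + 2) * (a + 2 - 2) * (2 * a / (a + 1))) * sqrt ((a + 2) * (a + 2 - 2) * (2 * a / (a + 1))) / (16 * PI^2)) by (field; lra).
    rewrite sqrt_sqrt. f_equal. ring. replace (a+2-2) with a by ring. lra. }
  assert (Hb : 0 < b).
  { unfold b, bb. rewrite HD, Hal. unfold Rdiv at 1. apply Rmult_lt_0_compat; [|apply Rinv_0_lt_compat; lra].
    apply sqrt_lt_R0. replace (a+2-2) with a by ring. exact Hpos. }
  assert (Hal' : alpha2 (S (S (S m))) = 16*PI^2*(b*b)/((a+2)*a)).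
  { rewrite Hb2, Hal. field. repeat split; lra. }
  set (g := (a+2)*a*k*c/(4*PI^2)).
  set (kap := (a+2)^2*k*c/(16*PI^2)).
  destruct (powL1 (S (S m))) as [C1 [HC1 HL1]].
  destruct (powL1 (S m)) as [C1' [HC1' HL1']].
  destruct (powL2 (S (S (S m)))) as [C2 [HC2 HL2]].
  destruct (powL2 (S m)) as [C2' [HC2' HL2']].
  set (K0 := (T/2 + Rabs (T^2 - g)/(4*b))/b).
  assert (HK0 : 0 <= K0).
  { unfold K0. unfold Rdiv. apply Rmult_le_pos; [|left; apply Rinv_0_lt_compat; lra].
    pose proof (Rabs_pos (T^2-g)). assert (0 <= Rabs (T^2-g) * / (4*b)) by (apply Rmult_le_pos; [lra| left; apply Rinv_0_lt_compat; lra]). lra. }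
  set (q := (a+2)/a).
  assert (Hq : 0 <= q) by (unfold q, Rdiv; apply Rmult_le_pos; [lra| left; apply Rinv_0_lt_compat; lra]).
  assert (Hgb : 0 <= Rabs g / (4*b^2)) by (unfold Rdiv; apply Rmult_le_pos; [apply Rabs_pos| left; apply Rinv_0_lt_compat; nra]).
  exists (T*C1*K0 + b*(C2 + q*C2')*K0^2 + Rabs kap*(1+C1')/b), (1 + K0 + Rabs g/(4*b^2)).
  split; [lra|].
  intros Phi HPhi.
  assert (HP1 : 1 < Phi) by lra.
  assert (HPK : K0 < Phi) by lra.
  assert (HPg : Rabs g < 4*b^2*Phi).
  { assert (Rabs g = (Rabs g / (4*b^2)) * (4*b^2)) by (field; lra).
    assert (0 < 4*b^2) by nra.
    assert (Rabs g / (4*b^2) < Phi) by lra. nra. }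
  set (SS := T^2 + 4*(b*b)*Phi^2 - g).
  assert (HSS : 0 <= SS).
  { unfold SS. pose proof (Rle_abs g). assert (0 < b*b) by nra. nra. }
  set (s := sqrt SS).
  assert (Hss : s*s = SS) by (apply sqrt_sqrt; exact HSS).
  assert (Hs0 : 0 <= s) by apply sqrt_pos.
  assert (Hw : wfun (S (S (S m))) k Om T V Phi = (T + s)/2/T).
  { unfold wfun, s. fold c.
    replace (T ^ 2 + Dr (S (S (S m))) * (Dr (S (S (S m))) - 2) * (alpha2 (S (S (S m))) * Phi ^ 2 - k * c) / (4 * PI ^ 2))
      with SS; [reflexivity|].
    unfold SS, g. rewrite HD, Hal'. field. repeat split; lra. }
  set (z := (T + s)/2).
  set (x := z/(b*Phi) - 1).
  assert (HbP : 0 < b*Phi) by nra.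
  assert (Hz : z = b*Phi*(1+x)) by (unfold x; field; lra).
  assert (Hprod : (s - 2*b*Phi)*(s + 2*b*Phi) = T^2 - g).
  { transitivity (s*s - 4*(b*b)*Phi^2); [ring|]. rewrite Hss. unfold SS. ring. }
  assert (Habs1 : Rabs (s - 2*b*Phi) <= Rabs (T^2-g)/(2*b*Phi)).
  { replace (s - 2*b*Phi) with ((T^2-g)/(s+2*b*Phi)) by (rewrite <- Hprod; field; lra).
    unfold Rdiv. rewrite Rabs_mult, Rabs_inv, (Rabs_right (s+2*b*Phi)) by lra.
    apply Rmult_le_compat_l; [apply Rabs_pos|]. apply Rinv_le_contravar; lra. }
  assert (Hx : Rabs x <= K0/Phi).
  { replace x with ((T/2 + (s - 2*b*Phi)/2)/(b*Phi)) by (unfold x, z; field; lra).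
    set (r := Rabs (T^2-g)) in *.
    assert (Hr : r/(2*b*Phi) <= r/(2*b)).
    { unfold Rdiv. apply Rmult_le_compat_l; [apply Rabs_pos|]. apply Rinv_le_contravar; nra. }
    assert (Hn : Rabs (T/2 + (s - 2*b*Phi)/2) <= T/2 + r/(4*b)).
    { eapply Rle_trans; [apply Rabs_triang|].
      rewrite (Rabs_right (T/2)) by lra.
      replace ((s - 2*b*Phi)/2) with ((s - 2*b*Phi)*/2) by reflexivity.
      rewrite Rabs_mult, (Rabs_right (/2)) by lra.
      replace (r/(4*b)) with (r/(2*b)*/2) by (field; lra). lra. }
    unfold Rdiv at 1. rewrite Rabs_mult, Rabs_inv, (Rabs_right (b*Phi)) by lra.
    replace (K0/Phi) with ((T/2 + r/(4*b)) * /(b*Phi)) by (unfold K0, r; field; lra).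
    apply Rmult_le_compat_r; [left; apply Rinv_0_lt_compat; lra| exact Hn]. }
  assert (Hx1 : Rabs x <= 1).
  { eapply Rle_trans; [exact Hx|]. apply div_le_1; lra. }
  assert (HPhi0 : 0 < Phi) by lra.
  assert (HKP : 0 <= K0/Phi) by (unfold Rdiv; apply Rmult_le_pos; [lra| left; apply Rinv_0_lt_compat; lra]).
  assert (Hx2 : x^2 <= (K0/Phi)^2).
  { assert (x^2 = Rabs x * Rabs x) by (rewrite <- Rabs_mult; rewrite Rabs_right; [ring| nra]).
    pose proof (Rabs_pos x). nra. }
  assert (HTn : T ^ (S (S m)) <> 0) by (apply pow_nonzero; lra).
  assert (HTn' : T ^ (S m) <> 0) by (apply pow_nonzero; lra).
  assert (HBn : (b*Phi) ^ (S m) <> 0) by (apply pow_nonzero; lra).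
  assert (Hpw : forall n, (z / T) ^ n = (b*Phi)^n * (1+x)^n / T^n).
  { intro n. rewrite Hz. unfold Rdiv. rewrite !Rpow_mult_distr, pow_inv. reflexivity. }
  split.
  - rewrite xi_form, Hw by exact HT. fold z.
    assert (E1 : T ^ (S (S (S m))) * (z / T) ^ (S (S m)) / (b * Phi) ^ (S (S m)) - T = T*((1+x)^(S (S m)) - 1)).
    { rewrite Hpw. change (T ^ (S (S (S m)))) with (T * T ^ (S (S m))).
      field. repeat split; first [assumption | lra | (apply pow_nonzero; lra)]. }
    rewrite E1, Rabs_mult, (Rabs_right T) by lra.
    specialize (HL1 x Hx1).
    assert (T * Rabs ((1 + x) ^ S (S m) - 1) <= T*C1*(K0/Phi)).
    { rewrite Rmult_assoc. apply Rmult_le_compat_l; [lra|].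
      eapply Rle_trans; [exact HL1|]. apply Rmult_le_compat_l; [lra|exact Hx]. }
    eapply Rle_trans; [exact H|].
    assert (0 <= b * (C2 + q * C2') * K0 ^ 2 / Phi).
    { unfold Rdiv. apply Rmult_le_pos; [|left; apply Rinv_0_lt_compat; lra].
      apply Rmult_le_pos; [|nra]. apply Rmult_le_pos; nra. }
    assert (0 <= Rabs kap * (1 + C1') / b / Phi).
    { unfold Rdiv. apply Rmult_le_pos; [|left; apply Rinv_0_lt_compat; lra].
      apply Rmult_le_pos; [|left; apply Rinv_0_lt_compat; lra]. pose proof (Rabs_pos kap). nra. }
    replace ((T * C1 * K0 + b * (C2 + q * C2') * K0 ^ 2 + Rabs kap * (1 + C1') / b) / Phi)
      with (T * C1 * (K0 / Phi) + b * (C2 + q * C2') * K0 ^ 2 / Phi + Rabs kap * (1 + C1') / b / Phi)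
      by (field; lra).
    lra.
  - rewrite chi_form, Hw by exact HT. fold z. fold c.
    set (E := (1+x)^(S (S (S m))) - 1 - INR (S (S (S m)))*x).
    set (E' := (1+x)^(S m) - 1 - INR (S m)*x).
    assert (E2 : T ^ (S (S (S m))) * ((z / T) ^ (S m) * ((z / T) ^ 2 + Dr (S (S (S m))) ^ 2 / (16 * PI ^ 2 * T ^ 2) *
        (k * c - alpha2 (S (S (S m))) * Phi ^ 2))) / (b * Phi) ^ (S (S m))
       - b * Phi * (1 - Dr (S (S (S m))) / (Dr (S (S (S m))) - 2))
       = b*Phi*(E - q*E') + kap*(1+x)^(S m)/(b*Phi)).
    { unfold E, E', q, kap. rewrite Hpw, HD, Hal'.
      replace (INR (S (S (S m)))) with (a+2) by (unfold a; rewrite !S_INR; ring). fold a.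
      change (T ^ (S (S (S m)))) with (T * (T * T ^ (S m))).
      change ((b*Phi) ^ (S (S m))) with (b*Phi * (b*Phi) ^ (S m)).
      change ((1+x) ^ (S (S (S m)))) with ((1+x) * ((1+x) * (1+x) ^ (S m))).
      rewrite Hz. field. repeat split; first [assumption | lra | (apply pow_nonzero; lra)]. }
    rewrite E2.
    eapply Rle_trans; [apply Rabs_triang|].
    specialize (HL2 x Hx1). specialize (HL2' x Hx1). specialize (HL1' x Hx1).
    fold E in HL2. fold E' in HL2'.
    assert (T1 : Rabs (b*Phi*(E - q*E')) <= b*(C2 + q*C2')*K0^2/Phi).
    { rewrite Rabs_mult, (Rabs_right (b*Phi)) by lra.
      assert (Rabs (E - q*E') <= (C2 + q*C2') * x^2).
      { unfold Rminus. eapply Rle_trans; [apply Rabs_triang|]. rewrite Rabs_Ropp, Rabs_mult, (Rabs_right q) by lra.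
        assert (0 <= x^2) by nra. nra. }
      assert (0 <= C2 + q*C2') by nra.
      apply Rle_trans with (b*Phi*((C2 + q*C2')*(K0/Phi)^2)).
      { apply Rmult_le_compat_l; [lra|]. eapply Rle_trans; [exact H|]. apply Rmult_le_compat_l; lra. }
      right. field. lra. }
    assert (T2 : Rabs (kap*(1+x)^(S m)/(b*Phi)) <= Rabs kap*(1+C1')/b/Phi).
    { unfold Rdiv. rewrite !Rabs_mult, Rabs_inv, (Rabs_right (b*Phi)) by lra.
      assert (Rabs ((1+x)^(S m)) <= 1 + C1').
      { replace ((1+x)^(S m)) with (((1+x)^(S m) - 1) + 1) by ring.
        eapply Rle_trans; [apply Rabs_triang|]. rewrite Rabs_R1. nra. }
      replace (Rabs kap * (1 + C1') * / b * / Phi) with (Rabs kap * (1 + C1') * /(b*Phi)) by (field; lra).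
      apply Rmult_le_compat_r; [left; apply Rinv_0_lt_compat; lra|].
      apply Rmult_le_compat_l; [apply Rabs_pos|exact H]. }
    assert (0 <= T * C1 * K0 / Phi).
    { unfold Rdiv. apply Rmult_le_pos; [|left; apply Rinv_0_lt_compat; lra]. apply Rmult_le_pos; [apply Rmult_le_pos|]; lra. }
    replace ((T * C1 * K0 + b * (C2 + q * C2') * K0 ^ 2 + Rabs kap * (1 + C1') / b) / Phi)
      with (T * C1 * K0 / Phi + b * (C2 + q * C2') * K0 ^ 2 / Phi + Rabs kap * (1 + C1') / b / Phi)
      by (field; lra).
    lra.
Qed.

Lemma absb (u e : R) : Rabs u <= e -> -e <= u <= e.
Proof. intros H. pose proof (Rle_abs u). pose proof (Rle_abs (-u)). rewrite Rabs_Ropp in *. lra. Qed.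

Lemma bnd_lin (u e V : R) : 0 <= V -> -e <= u <= e -> -(V*e) <= V*u <= V*e.
Proof. intros HV [H1 H2]. split; nra. Qed.

Lemma comb_gen (Tc Th V1 V2 P e NN DD nn dd : R) :
  0 < Tc -> Tc < Th -> 0 < V1 -> V1 < V2 -> 0 < P -> 0 <= e ->
  3*(V1+V2)*e <= Th*(V2-V1)/2 ->
  NN = P * (Tc*(V2-V1) + nn) -> DD = P * (Th*(V2-V1) + dd) ->
  Rabs nn <= 3*(V1+V2)*e -> Rabs dd <= 3*(V1+V2)*e ->
  Rabs (1 - NN/DD - (1 - Tc/Th)) <= (2*(Th+Tc)*(3*(V1+V2))/(Th*Th*(V2-V1))) * e.
Proof.
  intros. subst NN DD.
  assert (Hd : 0 < Th*(V2-V1) + dd) by (apply absb in H9; nra).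
  replace (1 - P * (Tc * (V2 - V1) + nn) / (P * (Th * (V2 - V1) + dd)) - (1 - Tc / Th))
    with (- ((Tc * (V2 - V1) + nn) / (Th * (V2 - V1) + dd) - Tc/Th)) by (field; lra).
  rewrite Rabs_Ropp. apply comb_core; lra.
Qed.

Lemma comb_nonregen (Tc Th V1 V2 q P Q e pc ph x11 x12 x21 x22 c11 c12 c21 c22 : R) :
  0 < Tc -> Tc < Th -> 0 < V1 -> V1 < V2 -> 0 <= q <= 1 -> 0 < P -> 0 <= e ->
  3*(V1+V2)*e <= Th*(V2-V1)/2 ->
  Rabs (pc*x11/P - Tc) <= e -> Rabs (pc*x12/P - Tc) <= e ->
  Rabs (ph*x21/P - Th) <= e -> Rabs (ph*x22/P - Th) <= e ->
  Rabs (pc*c11/P - Q) <= e -> Rabs (pc*c12/P - Q) <= e ->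
  Rabs (ph*c21/P - Q) <= e -> Rabs (ph*c22/P - Q) <= e ->
  Rabs (1 - (pc*(V2*x12 - V1*x11) + q*V2*(ph*c22 - pc*c12))
            / (ph*(V2*x22 - V1*x21) + q*V1*(ph*c21 - pc*c11)) - (1 - Tc/Th))
   <= (2*(Th+Tc)*(3*(V1+V2))/(Th*Th*(V2-V1))) * e.
Proof.
  intros HTc HTh HV1 HV2 Hq HP He Hsm H11 H12 H21 H22 G11 G12 G21 G22.
  apply absb in H11, H12, H21, H22, G11, G12, G21, G22.
  set (X11 := pc*x11/P) in *. set (X12 := pc*x12/P) in *. set (X21 := ph*x21/P) in *. set (X22 := ph*x22/P) in *.
  set (Y11 := pc*c11/P) in *. set (Y12 := pc*c12/P) in *. set (Y21 := ph*c21/P) in *. set (Y22 := ph*c22/P) in *.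
  apply comb_gen with (P := P)
    (nn := V2*(X12-Tc) - V1*(X11-Tc) + q*V2*((Y22-Q) - (Y12-Q)))
    (dd := V2*(X22-Th) - V1*(X21-Th) + q*V1*((Y21-Q) - (Y11-Q))); try lra.
  - unfold X11, X12, Y12, Y22. field. lra.
  - unfold X21, X22, Y11, Y21. field. lra.
  - apply Rabs_le.
    pose proof (bnd_lin _ _ V2 ltac:(lra) H12). pose proof (bnd_lin _ _ V1 ltac:(lra) H11).
    assert (HY : -(2*e) <= (Y22-Q) - (Y12-Q) <= 2*e) by lra.
    pose proof (bnd_lin _ _ (q*V2) ltac:(nra) HY). assert (q*V2*(2*e) <= V2*(2*e)) by nra. lra.
  - apply Rabs_le.
    pose proof (bnd_lin _ _ V2 ltac:(lra) H22). pose proof (bnd_lin _ _ V1 ltac:(lra) H21).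
    assert (HY : -(2*e) <= (Y21-Q) - (Y11-Q) <= 2*e) by lra.
    pose proof (bnd_lin _ _ (q*V1) ltac:(nra) HY). assert (q*V1*(2*e) <= V1*(2*e)) by nra. lra.
Qed.

Lemma comb_regen (Tc Th V1 V2 q P Q e pc ph x11 x12 x21 x22 c11 c12 c21 c22 : R) :
  0 < Tc -> Tc < Th -> 0 < V1 -> V1 < V2 -> 0 <= q <= 1 -> 0 < P -> 0 <= e ->
  3*(V1+V2)*e <= Th*(V2-V1)/2 ->
  Rabs (pc*x11/P - Tc) <= e -> Rabs (pc*x12/P - Tc) <= e ->
  Rabs (ph*x21/P - Th) <= e -> Rabs (ph*x22/P - Th) <= e ->
  Rabs (pc*c11/P - Q) <= e -> Rabs (pc*c12/P - Q) <= e ->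
  Rabs (ph*c21/P - Q) <= e -> Rabs (ph*c22/P - Q) <= e ->
  Rabs (1 - (pc*(V2*x12 - V1*x11) + q*(V2*(ph*c22 - pc*c12) - V1*(ph*c21 - pc*c11)))
            / (ph*(V2*x22 - V1*x21)) - (1 - Tc/Th))
   <= (2*(Th+Tc)*(3*(V1+V2))/(Th*Th*(V2-V1))) * e.
Proof.
  intros HTc HTh HV1 HV2 Hq HP He Hsm H11 H12 H21 H22 G11 G12 G21 G22.
  apply absb in H11, H12, H21, H22, G11, G12, G21, G22.
  set (X11 := pc*x11/P) in *. set (X12 := pc*x12/P) in *. set (X21 := ph*x21/P) in *. set (X22 := ph*x22/P) in *.
  set (Y11 := pc*c11/P) in *. set (Y12 := pc*c12/P) in *. set (Y21 := ph*c21/P) in *. set (Y22 := ph*c22/P) in *.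
  apply comb_gen with (P := P)
    (nn := V2*(X12-Tc) - V1*(X11-Tc) + q*(V2*((Y22-Q) - (Y12-Q)) - V1*((Y21-Q) - (Y11-Q))))
    (dd := V2*(X22-Th) - V1*(X21-Th)); try lra.
  - unfold X11, X12, Y11, Y12, Y21, Y22. field. lra.
  - unfold X21, X22. field. lra.
  - apply Rabs_le.
    pose proof (bnd_lin _ _ V2 ltac:(lra) H12). pose proof (bnd_lin _ _ V1 ltac:(lra) H11).
    assert (HY1 : -(2*e) <= (Y22-Q) - (Y12-Q) <= 2*e) by lra.
    assert (HY2 : -(2*e) <= (Y21-Q) - (Y11-Q) <= 2*e) by lra.
    pose proof (bnd_lin _ _ V2 ltac:(lra) HY1). pose proof (bnd_lin _ _ V1 ltac:(lra) HY2).
    assert (HZ : -(2*(V1+V2)*e) <= V2*((Y22-Q) - (Y12-Q)) - V1*((Y21-Q) - (Y11-Q)) <= 2*(V1+V2)*e) by lra.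
    assert (-(2*(V1+V2)*e) <= q*(V2*((Y22-Q) - (Y12-Q)) - V1*((Y21-Q) - (Y11-Q))) <= 2*(V1+V2)*e).
    { destruct HZ. split; nra. }
    lra.
  - apply Rabs_le.
    pose proof (bnd_lin _ _ V2 ltac:(lra) H22). pose proof (bnd_lin _ _ V1 ltac:(lra) H21). lra.
Qed.

Lemma bb_pos m : 0 < bb (S (S (S m))).
Proof.
  unfold bb, alpha2, Dr. rewrite !S_INR. pose proof (pos_INR m). pose proof PI_RGT_0.
  unfold Rdiv at 2. apply Rmult_lt_0_compat; [|apply Rinv_0_lt_compat; lra].
  apply sqrt_lt_R0. apply Rmult_lt_0_compat; [nra|].
  unfold Rdiv; apply Rmult_lt_0_compat; [lra|apply Rinv_0_lt_compat; lra].
Qed.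

Lemma divK (K1 K Phi : R) : 0 < Phi -> K1 <= Rabs K -> K1 / Phi <= Rabs K / Phi.
Proof. intros. unfold Rdiv. apply Rmult_le_compat_r; [left; apply Rinv_0_lt_compat|]; lra. Qed.

Theorem mainTheorem3 (D : nat) (k Om Tc Th V1 V2 : R) :
  (3 <= D)%nat ->
  (k = 1 \/ k = 0 \/ k = -1) ->
  0 < Om ->
  0 < Tc -> Tc < Th ->
  0 < V1 -> V1 < V2 ->
  (exists C M : R, 0 < M /\
     forall Phi : R, M < Phi ->
       Rabs (eta_nonregen D k Om Tc Th V1 V2 Phi - (1 - Tc / Th)) <= C / Phi) /\
  (exists C M : R, 0 < M /\
     forall Phi : R, M < Phi ->
       Rabs (eta_regen D k Om Tc Th V1 V2 Phi - (1 - Tc / Th)) <= C / Phi).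
Proof.
  intros HD Hk HOm HTc HTh HV1 HV2.
  destruct D as [|[|[|m]]]; [lia|lia|lia|].
  assert (HTh0 : 0 < Th) by lra.
  destruct (per_T m k Om V1 Tc HTc) as [K11 [M11 [HM11 P11]]].
  destruct (per_T m k Om V2 Tc HTc) as [K12 [M12 [HM12 P12]]].
  destruct (per_T m k Om V1 Th HTh0) as [K21 [M21 [HM21 P21]]].
  destruct (per_T m k Om V2 Th HTh0) as [K22 [M22 [HM22 P22]]].
  set (K := Rmax (Rmax K11 K12) (Rmax K21 K22)).
  assert (HK11 : K11 <= Rabs K) by (eapply Rle_trans; [|apply Rle_abs]; unfold K; eapply Rle_trans; [|apply Rmax_l]; apply Rmax_l).
  assert (HK12 : K12 <= Rabs K) by (eapply Rle_trans; [|apply Rle_abs]; unfold K; eapply Rle_trans; [|apply Rmax_l]; apply Rmax_r).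
  assert (HK21 : K21 <= Rabs K) by (eapply Rle_trans; [|apply Rle_abs]; unfold K; eapply Rle_trans; [|apply Rmax_r]; apply Rmax_l).
  assert (HK22 : K22 <= Rabs K) by (eapply Rle_trans; [|apply Rle_abs]; unfold K; eapply Rle_trans; [|apply Rmax_r]; apply Rmax_r).
  set (M0 := Rmax (Rmax M11 M12) (Rmax M21 M22)).
  assert (HM0 : M11 <= M0 /\ M12 <= M0 /\ M21 <= M0 /\ M22 <= M0).
  { unfold M0. repeat split.
    - eapply Rle_trans; [|apply Rmax_l]; apply Rmax_l.
    - eapply Rle_trans; [|apply Rmax_l]; apply Rmax_r.
    - eapply Rle_trans; [|apply Rmax_r]; apply Rmax_l.
    - eapply Rle_trans; [|apply Rmax_r]; apply Rmax_r. }
  set (Ss := 3*(V1+V2)). set (W := V2 - V1).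
  assert (HW : 0 < W) by (unfold W; lra).
  assert (HS : 0 < Ss) by (unfold Ss; lra).
  set (B := 2*Ss*Rabs K/(Th*W)).
  assert (HB : 0 <= B) by (unfold B, Rdiv; apply Rmult_le_pos; [pose proof (Rabs_pos K); nra| left; apply Rinv_0_lt_compat; nra]).
  set (Cst := 2*(Th+Tc)*(3*(V1+V2))/(Th*Th*(V2-V1))).
  set (M := M0 + B + 1).
  assert (HMpos : 0 < M) by (unfold M; destruct HM0 as [? _]; lra).
  assert (Hq : 0 <= (Dr (S (S (S m))) - 1) / Dr (S (S (S m))) <= 1).
  { unfold Dr. rewrite !S_INR. pose proof (pos_INR m). split.
    - unfold Rdiv; apply Rmult_le_pos; [lra| left; apply Rinv_0_lt_compat; lra].
    - apply (Rmult_le_reg_r (INR m + 1 + 1 + 1)); [lra|]. unfold Rdiv. rewrite Rmult_assoc, Rinv_l by lra. lra. }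
  pose proof (bb_pos m) as Hbb.
  assert (Hgen : forall Phi, M < Phi ->
     0 < Phi /\ 0 < (bb (S (S (S m))) * Phi) ^ (S (S m)) /\ 0 <= Rabs K / Phi /\
     3*(V1+V2)*(Rabs K / Phi) <= Th*(V2-V1)/2 /\ Cst * (Rabs K / Phi) = Cst * Rabs K / Phi /\
     M11 < Phi /\ M12 < Phi /\ M21 < Phi /\ M22 < Phi).
  { intros Phi HP. destruct HM0 as [? [? [? ?]]].
    assert (HP0 : 0 < Phi) by (unfold M in HP; lra).
    split; [lra|]. split; [apply pow_lt; nra|]. split.
    { unfold Rdiv; apply Rmult_le_pos; [apply Rabs_pos| left; apply Rinv_0_lt_compat; lra]. }
    split.
    { assert (B < Phi) by (unfold M in HP; lra).
      fold Ss. fold W.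
      apply (Rmult_le_reg_r Phi); [lra|].
      replace (Ss * (Rabs K / Phi) * Phi) with (Ss * Rabs K) by (field; lra).
      assert (HSB : Ss * Rabs K = B * (Th * W) / 2) by (unfold B; field; lra).
      rewrite HSB. assert (0 < Th*W) by nra. nra. }
    split; [unfold Rdiv; ring|]. unfold M in HP. repeat split; lra. }
  split.
  - exists (Cst * Rabs K), M. split; [exact HMpos|].
    intros Phi HP. destruct (Hgen Phi HP) as [HP0 [HPP [He [Hsm [HC [H11 [H12 [H21 H22]]]]]]]].
    rewrite <- HC.
    destruct (P11 Phi H11) as [A11 B11]. destruct (P12 Phi H12) as [A12 B12].
    destruct (P21 Phi H21) as [A21 B21]. destruct (P22 Phi H22) as [A22 B22].
    unfold eta_nonregen; cbv zeta.
    apply comb_nonregen with (P := (bb (S (S (S m))) * Phi) ^ (S (S m)))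
      (Q := bb (S (S (S m))) * Phi * (1 - Dr (S (S (S m))) / (Dr (S (S (S m))) - 2))); try assumption;
      eapply Rle_trans; try eassumption; apply divK; assumption.
  - exists (Cst * Rabs K), M. split; [exact HMpos|].
    intros Phi HP. destruct (Hgen Phi HP) as [HP0 [HPP [He [Hsm [HC [H11 [H12 [H21 H22]]]]]]]].
    rewrite <- HC.
    destruct (P11 Phi H11) as [A11 B11]. destruct (P12 Phi H12) as [A12 B12].
    destruct (P21 Phi H21) as [A21 B21]. destruct (P22 Phi H22) as [A22 B22].
    unfold eta_regen; cbv zeta.
    apply comb_regen with (P := (bb (S (S (S m))) * Phi) ^ (S (S m)))
      (Q := bb (S (S (S m))) * Phi * (1 - Dr (S (S (S m))) / (Dr (S (S (S m))) - 2))); try assumption;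
      eapply Rle_trans; try eassumption; apply divK; assumption.
Qed.
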